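(* Let $m\ge3$, let $w_0^2(m)=\big(\sum_{l=1}^{m-1}\frac{m-l}{l^2}\big)^{-1}$, for $k\ge0$ let $w_{k+1}^2(m)=w_k^2(m)+\big(\sum_{l=1}^{m-1}\frac{m-l}{l^2-w_k^2(m)}\big)^{-1}$ with $w_k(m)>0$, and put $\varepsilon_k(m)=1-w_k(m)$ and $q(m)=\frac{7m-6}{7m-4}$. Then for all $k=0,1,2,\dots$, $$\varepsilon_{k+1}(m)<\varepsilon_k(m)\,q(m),$$ and consequently $\varepsilon_{k+1}(m)<\varepsilon_0(m)\,q(m)^k$, where $\varepsilon_0(m)=1-\big[m\frac{\pi^2}{6}-m\psi'(m)-\gamma-\psi(m)\big]^{-1/2}\in(0,1)$.
   Context: $\psi$ denotes the digamma function and $\gamma$ the Euler–Mascheroni constant. *)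

(* Defs.v *)
From Stdlib Require Import Reals Lra.
From Coquelicot Require Import Coquelicot.
Open Scope R_scope.

Definition EulerGamma : R :=
  real (Lim_seq (fun n => sum_n_m (fun k => / INR k) 1 n - ln (INR n))).

Definition digamma (x : R) : R :=
  - EulerGamma + Series (fun n => / (INR n + 1) - / (INR n + x)).

Definition trigamma (x : R) : R :=
  Series (fun n => / (INR n + x) ^ 2).

Definition Ssum (m : nat) (a : R) : R :=
  sum_n_m (fun l => (INR m - INR l) / (INR l ^ 2 - a)) 1 (m - 1).

Fixpoint wsq (m : nat) (k : nat) : R :=
  match k with
  | O => / Ssum m 0
  | S k' => wsq m k' + / Ssum m (wsq m k')
  end.

(* w_k(m) > 0 is the positive square root. *)
Definition w (m k : nat) : R := sqrt (wsq m k).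
Definition eps (m k : nat) : R := 1 - w m k.
Definition q (m : nat) : R := (7 * INR m - 6) / (7 * INR m - 4).

(* Main.v *)
Require Import Defs.
From Stdlib Require Import Reals Lra Lia.
From Coquelicot Require Import Coquelicot.
Open Scope R_scope.

Definition IA (k : nat) : R := RInt (fun x => cos x ^ k) 0 (PI/2).
Definition IB (k : nat) : R := RInt (fun x => x^2 * cos x ^ k) 0 (PI/2).

Lemma RI_scal (f : R -> R) a b c l : is_RInt f a b l -> is_RInt (fun x => c * f x) a b (c * l).
Proof. intro H. exact (@is_RInt_scal R_NormedModule f a b c l H). Qed.
Lemma RI_minus (f g : R -> R) a b l1 l2 : is_RInt f a b l1 -> is_RInt g a b l2 ->
  is_RInt (fun x => f x - g x) a b (l1 - l2).
Proof. intros H1 H2. exact (@is_RInt_minus R_NormedModule f g a b l1 l2 H1 H2). Qed.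
Lemma RI_plus (f g : R -> R) a b l1 l2 : is_RInt f a b l1 -> is_RInt g a b l2 ->
  is_RInt (fun x => f x + g x) a b (l1 + l2).
Proof. intros H1 H2. exact (@is_RInt_plus R_NormedModule f g a b l1 l2 H1 H2). Qed.
Lemma RI_unique (f : R -> R) a b l1 l2 : is_RInt f a b l1 -> is_RInt f a b l2 -> l1 = l2.
Proof. intros H1 H2. rewrite <- (@is_RInt_unique R_CompleteNormedModule f a b l1 H1). exact (@is_RInt_unique R_CompleteNormedModule f a b l2 H2). Qed.

Lemma RI_derive (f df : R -> R) a b :
  (forall x, Rmin a b <= x <= Rmax a b -> is_derive f x (df x)) ->
  (forall x, Rmin a b <= x <= Rmax a b -> continuous df x) ->
  is_RInt df a b (f b - f a).
Proof. intros H1 H2. exact (@is_RInt_derive R_CompleteNormedModule f df a b H1 H2). Qed.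

Ltac fixINR := repeat match goal with
  |- context [match ?n with 0%nat => 1 | S _ => INR ?n + 1 end] =>
     change (match n with 0%nat => 1 | S _ => INR n + 1 end) with (INR (S n)); rewrite (S_INR n) end.

Lemma isIA k : is_RInt (fun x => cos x ^ k) 0 (PI/2) (IA k).
Proof. unfold IA, IB. apply (@RInt_correct R_CompleteNormedModule), (@ex_RInt_continuous R_CompleteNormedModule). intros z _.
  apply (@ex_derive_continuous R_AbsRing R_NormedModule). auto_derive. auto. Qed.
Lemma isIB k : is_RInt (fun x => x^2 * cos x ^ k) 0 (PI/2) (IB k).
Proof. unfold IA, IB. apply (@RInt_correct R_CompleteNormedModule), (@ex_RInt_continuous R_CompleteNormedModule). intros z _.
  apply (@ex_derive_continuous R_AbsRing R_NormedModule). auto_derive. auto. Qed.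

Lemma rec1 k : (INR k + 2) * IA (S (S k)) - (INR k + 1) * IA k = 0.
Proof.
  assert (H1 : is_RInt (fun x => (INR k + 2) * cos x ^ (S (S k)) - (INR k + 1) * cos x ^ k) 0 (PI/2)
           ((INR k + 2) * IA (S (S k)) - (INR k + 1) * IA k)).
  { apply (RI_minus (fun x => (INR k + 2) * cos x ^ (S (S k))) (fun x => (INR k + 1) * cos x ^ k));
    apply RI_scal; apply isIA. }
  assert (H2 : is_RInt (fun x => (INR k + 2) * cos x ^ (S (S k)) - (INR k + 1) * cos x ^ k) 0 (PI/2)
           ((fun x => sin x * cos x ^ (S k)) (PI/2) - (fun x => sin x * cos x ^ (S k)) 0)).
  { apply (RI_derive (fun x => sin x * cos x ^ (S k))).
    - intros x _. auto_derive; auto. fixINR. simpl pow.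
      pose proof (sin2_cos2 x) as H. unfold Rsqr in H. pose proof (f_equal (fun t => t * ((INR k + 1) * cos x ^ k)) H) as H0. simpl in H0. lra.
    - intros x _. apply (@ex_derive_continuous R_AbsRing R_NormedModule). auto_derive. auto. }
  cbv beta in H2. rewrite cos_PI2, sin_0 in H2. simpl pow in H2.
  rewrite (RI_unique _ _ _ _ _ H1 H2).
  ring.
Qed.

Lemma rec2 k : IA (S (S k)) + ((INR k + 2)^2/2) * IB (S (S k)) - ((INR k + 2)*(INR k + 1)/2) * IB k = 0.
Proof.
  set (c1 := (INR k + 2)^2/2). set (c2 := (INR k + 2)*(INR k + 1)/2).
  assert (H1 : is_RInt (fun x => (cos x ^ (S (S k)) + c1 * (x^2 * cos x ^ (S (S k)))) - c2 * (x^2 * cos x ^ k)) 0 (PI/2)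
           (IA (S (S k)) + c1 * IB (S (S k)) - c2 * IB k)).
  { apply RI_minus. apply RI_plus. apply isIA. apply RI_scal, isIB. apply RI_scal, isIB. }
  set (F := fun x => x * cos x ^ (S (S k)) + (INR k + 2)/2 * (x^2 * sin x * cos x ^ (S k))).
  assert (H2 : is_RInt (fun x => (cos x ^ (S (S k)) + c1 * (x^2 * cos x ^ (S (S k)))) - c2 * (x^2 * cos x ^ k)) 0 (PI/2)
           (F (PI/2) - F 0)).
  { apply (RI_derive F).
    - intros x _. unfold F. auto_derive; auto. fixINR. simpl pow. unfold c1, c2.
      pose proof (sin2_cos2 x) as H. unfold Rsqr in H.
      pose proof (f_equal (fun t => t * ((INR k + 2)/2 * (x*x) * (INR k + 1) * cos x ^ k)) H) as H0. simpl in H0. lra.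
    - intros x _. apply (@ex_derive_continuous R_AbsRing R_NormedModule). auto_derive. auto. }
  unfold F in H2. rewrite cos_PI2, sin_0 in H2. simpl pow in H2.
  rewrite (RI_unique _ _ _ _ _ H1 H2).
  ring.
Qed.

Lemma xcos_le_sin x : 0 <= x <= PI/2 -> x * cos x <= sin x.
Proof.
  intros [H0 H1]. pose proof PI_4 as HP. pose proof PI_RGT_0.
  destruct (sin_bound x 0 H0 ltac:(lra)) as [Hs _].
  destruct (cos_bound x 0 ltac:(lra) H1) as [_ Hc].
  replace (sin_approx x (2*0+1)) with (x - x^3/6) in Hs by (unfold sin_approx, sin_term; simpl; field).
  replace (cos_approx x (2*(0+1))) with (1 - x^2/2 + x^4/24) in Hc by (unfold cos_approx, cos_term; simpl; field).
  assert (x * cos x <= x * (1 - x^2/2 + x^4/24)) by (apply Rmult_le_compat_l; lra).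
  assert (x*x <= 4) by nra.
  assert (x * (1 - x^2/2 + x^4/24) <= x - x^3/6).
  { assert (0 <= x^3 * (8 - x*x)/24) by (apply Rmult_le_pos; [apply Rmult_le_pos; [apply pow_le; lra| lra]| lra]).
    assert (x - x^3/6 - x * (1 - x^2/2 + x^4/24) = x^3 * (8 - x*x)/24) by field. lra. }
  lra.
Qed.

Lemma IA0 : IA 0 = PI/2.
Proof.
  assert (H2 : is_RInt (fun x => cos x ^ 0) 0 (PI/2) ((fun x => x) (PI/2) - (fun x => x) 0)).
  { apply (RI_derive (fun x => x)).
    - intros x _. auto_derive; auto.
    - intros x _. apply (@ex_derive_continuous R_AbsRing R_NormedModule). auto_derive. auto. }
  rewrite (RI_unique _ _ _ _ _ (isIA 0) H2). simpl. ring.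
Qed.

Lemma IB0 : IB 0 = (PI/2)^3/3.
Proof.
  assert (H2 : is_RInt (fun x => x^2 * cos x ^ 0) 0 (PI/2) ((fun x => x^3/3) (PI/2) - (fun x => x^3/3) 0)).
  { apply (RI_derive (fun x => x^3/3)).
    - intros x _. auto_derive; auto. simpl. field.
    - intros x _. apply (@ex_derive_continuous R_AbsRing R_NormedModule). auto_derive. auto. }
  rewrite (RI_unique _ _ _ _ _ (isIB 0) H2). simpl. field.
Qed.

Lemma two_S n : (2 * S n = S (S (2 * n)))%nat.
Proof. lia. Qed.

Lemma IA_pos n : 0 < IA (2 * n).
Proof.
  induction n.
  - simpl. rewrite IA0. pose proof PI_RGT_0. lra.
  - rewrite two_S. pose proof (rec1 (2*n)) as H. pose proof (pos_INR (2*n)).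
    assert (IA (S (S (2*n))) = (INR (2*n) + 1)/(INR (2*n)+2) * IA (2*n)).
    { apply Rmult_eq_reg_l with (INR (2*n)+2); [|lra]. rewrite <- Rmult_assoc.
      replace ((INR (2*n)+2)*((INR (2*n) + 1)/(INR (2*n)+2))) with (INR (2*n)+1) by (field; lra). lra. }
    rewrite H1. apply Rmult_lt_0_compat; auto. apply Rdiv_lt_0_compat; lra.
Qed.

Definition rr (n : nat) : R := IB (2*n) / IA (2*n).

Lemma rr_step n : / (INR n + 1)^2 = 2 * (rr n - rr (S n)).
Proof.
  unfold rr. rewrite two_S.
  pose proof (rec1 (2*n)) as E1. pose proof (rec2 (2*n)) as E2.
  pose proof (IA_pos n) as P0. pose proof (IA_pos (S n)) as P1. rewrite two_S in P1.
  rewrite mult_INR in *. simpl INR in *.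
  set (A := IA (2*n)) in *. set (A' := IA (S (S (2*n)))) in *.
  set (B := IB (2*n)) in *. set (B' := IB (S (S (2*n)))) in *.
  pose proof (pos_INR n).
  assert (HA : A = (2*INR n+2)/(2*INR n+1) * A').
  { apply Rmult_eq_reg_l with (2*INR n+1); [|lra]. rewrite <- Rmult_assoc.
    replace ((2*INR n+1)*((2*INR n+2)/(2*INR n+1))) with (2*INR n+2) by (field; lra). lra. }
  assert (HB : B' = ((2*INR n+2)*(2*INR n+1)/2 * B - A') / ((2*INR n+2)^2/2)).
  { apply Rmult_eq_reg_l with ((2*INR n+2)^2/2). 2:{ apply Rgt_not_eq. apply Rdiv_lt_0_compat; [apply pow_lt|]; lra. }
    field_simplify; [|lra]. lra. }
  rewrite HB, HA. field. split; lra.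
Qed.

Lemma exRInt_cont (f : R -> R) a b : (forall x, ex_derive f x) -> ex_RInt f a b.
Proof. intros H. apply (@ex_RInt_continuous R_CompleteNormedModule). intros z _.
  apply (@ex_derive_continuous R_AbsRing R_NormedModule). apply H. Qed.

Lemma IB_ge0 k : 0 <= IB (2*k).
Proof.
  pose proof PI_RGT_0.
  replace 0 with (RInt (fun _ => 0) 0 (PI/2)).
  2:{ rewrite RInt_const. unfold scal; simpl. unfold mult; simpl. ring. }
  unfold IB. apply RInt_le.
  - lra.
  - apply exRInt_cont. intros; auto_derive; auto.
  - apply exRInt_cont. intros; auto_derive; auto.
  - intros x Hx. apply Rmult_le_pos. apply pow2_ge_0. rewrite pow_mult. apply pow_le. apply pow2_ge_0.
Qed.

Lemma IB_le k : IB (S (S k)) <= IA k - IA (S (S k)).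
Proof.
  pose proof PI_RGT_0.
  assert (E : RInt (fun x => cos x ^ k - cos x ^ (S (S k))) 0 (PI/2) = IA k - IA (S (S k))).
  { apply (@is_RInt_unique R_CompleteNormedModule). apply RI_minus; apply isIA. }
  rewrite <- E. unfold IB. apply RInt_le.
  - lra.
  - apply exRInt_cont. intros; auto_derive; auto.
  - apply exRInt_cont. intros; auto_derive; auto.
  - intros x Hx. simpl pow.
    assert (0 <= cos x) by (apply cos_ge_0; lra).
    assert (0 <= cos x ^ k) by (apply pow_le; lra).
    pose proof (xcos_le_sin x ltac:(lra)).
    pose proof (sin2_cos2 x) as Hs. unfold Rsqr in Hs.
    assert (0 <= x * cos x) by (apply Rmult_le_pos; lra).
    assert (x*cos x * (x * cos x) <= sin x * sin x) by nra.
    assert (cos x ^ k * (x*cos x * (x * cos x)) <= cos x ^ k * (sin x * sin x)) by (apply Rmult_le_compat_l; lra).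
    nra.
Qed.

Lemma rr_ge0 n : 0 <= rr n.
Proof. unfold rr. pose proof (IA_pos n). pose proof (IB_ge0 n). apply Rdiv_le_0_compat; lra. Qed.

Lemma rr_le n : rr (S n) <= / (2 * INR n + 1).
Proof.
  unfold rr. rewrite two_S. pose proof (IB_le (2*n)). pose proof (rec1 (2*n)) as E1.
  pose proof (IA_pos n) as P0. pose proof (IA_pos (S n)) as P1. rewrite two_S in P1.
  rewrite mult_INR in *. simpl INR in *. pose proof (pos_INR n).
  set (A := IA (2*n)) in *. set (A' := IA (S (S (2*n)))) in *.
  assert (HA : A = (2*INR n+2)/(2*INR n+1) * A').
  { apply Rmult_eq_reg_l with (2*INR n+1); [|lra]. rewrite <- Rmult_assoc.
    replace ((2*INR n+1)*((2*INR n+2)/(2*INR n+1))) with (2*INR n+2) by (field; lra). lra. }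
  rewrite HA in H. apply Rle_trans with (((2 * INR n + 2) / (2 * INR n + 1) * A' - A')/A').
  - unfold Rdiv. apply Rmult_le_compat_r; [left; apply Rinv_0_lt_compat; lra| lra].
  - right. field. lra.
Qed.

Lemma basel_partial N : sum_n (fun j => / (INR j + 1)^2) N = PI^2/6 - 2 * rr (S N).
Proof.
  induction N.
  - rewrite sum_O. rewrite (rr_step 0). unfold rr at 1. simpl (2*0)%nat. rewrite IA0, IB0.
    match goal with |- ?a = ?b => change (@eq R a b) end. field. apply PI_neq0.
  - rewrite sum_Sn, IHN. match goal with |- ?a = ?b => change (@eq R (PI^2/6 - 2*rr (S N) + / (INR (S N)+1)^2) b) end. rewrite (rr_step (S N)). ring.
Qed.

Lemma lim_inv_S : is_lim_seq (fun N => / INR (S N)) 0.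
Proof.
  apply (is_lim_seq_inv (fun N => INR (S N)) p_infty).
  - apply (is_lim_seq_incr_1 INR p_infty). apply is_lim_seq_INR.
  - discriminate.
Qed.

Lemma basel : is_series (fun j => / (INR j + 1)^2) (PI^2/6).
Proof.
  assert (H : is_lim_seq (sum_n (fun j => / (INR j + 1)^2)) (PI^2/6)).
  { apply is_lim_seq_le_le with (u := fun N => PI^2/6 - 2 * / INR (S N)) (w := fun _ => PI^2/6).
    - intro N. rewrite basel_partial. pose proof (rr_ge0 (S N)). pose proof (rr_le N).
      rewrite S_INR. pose proof (pos_INR N).
      assert (/ (2 * INR N + 1) <= / (INR N + 1)) by (apply Rinv_le_contravar; lra). lra.
    - assert (L : is_lim_seq (fun N => PI^2/6 - 2 * / INR (S N)) (PI^2/6 - 2*0)).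
      { apply is_lim_seq_minus'. apply is_lim_seq_const. apply (is_lim_seq_scal_l _ 2 0 lim_inv_S). }
      rewrite Rmult_0_r, Rminus_0_r in L. exact L.
    - apply is_lim_seq_const. }
  exact H.
Qed.

Lemma RS_ext (a b : nat -> R) l : (forall n, a n = b n) -> is_series a l -> is_series b l.
Proof. exact (@is_series_ext R_AbsRing R_NormedModule a b l). Qed.
Lemma RS_plus (a b : nat -> R) la lb : is_series a la -> is_series b lb -> is_series (fun n => a n + b n) (la + lb).
Proof. exact (@is_series_plus R_AbsRing R_NormedModule a b la lb). Qed.
Lemma RS_incr1 (a : nat -> R) l : is_series a (l + a 0%nat) -> is_series (fun k => a (S k)) l.
Proof. exact (@is_series_incr_1 R_AbsRing R_NormedModule a l). Qed.

Lemma telescope (u : nat -> R) : is_lim_seq u 0 -> is_series (fun n => u n - u (S n)) (u 0%nat).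
Proof.
  intro Hu.
  assert (P : forall N, sum_n (fun n => u n - u (S n)) N = u 0%nat - u (S N)).
  { induction N.
    - rewrite sum_O. reflexivity.
    - rewrite sum_Sn, IHN. match goal with |- ?a = ?b => change (@eq R (u 0%nat - u (S N) + (u (S N) - u (S (S N)))) b) end. ring. }
  assert (L : is_lim_seq (fun N => u 0%nat - u (S N)) (u 0%nat - 0)).
  { apply is_lim_seq_minus'. apply is_lim_seq_const. apply (is_lim_seq_incr_1 u 0). exact Hu. }
  rewrite Rminus_0_r in L.
  assert (L2 : is_lim_seq (sum_n (fun n => u n - u (S n))) (u 0%nat)).
  { apply is_lim_seq_ext with (2 := L). intro N. rewrite P. reflexivity. }
  exact L2.
Qed.

Definition H1 (j : nat) : R := sum_n_m (fun l => / INR l) 1 j.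
Definition H2 (j : nat) : R := sum_n_m (fun l => / INR l ^ 2) 1 j.

Lemma H1_S j : H1 (S j) = H1 j + / INR (S j).
Proof. unfold H1. rewrite sum_n_Sm by lia. reflexivity. Qed.
Lemma H2_S j : H2 (S j) = H2 j + / INR (S j) ^ 2.
Proof. unfold H2. rewrite sum_n_Sm by lia. reflexivity. Qed.
Lemma H1_0 : H1 0 = 0.
Proof. unfold H1. rewrite sum_n_m_zero by lia. reflexivity. Qed.
Lemma H2_0 : H2 0 = 0.
Proof. unfold H2. rewrite sum_n_m_zero by lia. reflexivity. Qed.

Lemma trig_series j : is_series (fun n => / (INR n + INR (S j))^2) (PI^2/6 - H2 j).
Proof.
  induction j.
  - rewrite H2_0, Rminus_0_r. apply RS_ext with (2 := basel). intro n. simpl INR. reflexivity.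
  - apply RS_ext with (a := fun k => (fun n => / (INR n + INR (S j))^2) (S k)).
    + intro n. rewrite !S_INR. f_equal. ring.
    + apply (RS_incr1 (fun n => / (INR n + INR (S j))^2)). rewrite H2_S. replace (PI ^ 2 / 6 - (H2 j + / INR (S j) ^ 2) + / (INR 0 + INR (S j)) ^ 2) with (PI^2/6 - H2 j).
      exact IHj. simpl (INR 0). rewrite Rplus_0_l. ring.
Qed.

Lemma inv_lim (c : R) : 0 <= c -> is_lim_seq (fun n => / (INR n + 1 + c)) 0.
Proof.
  intro Hc. apply is_lim_seq_le_le with (u := fun _ => 0) (w := fun n => / INR (S n)).
  - intro n. pose proof (pos_INR n). rewrite S_INR. split.
    + left. apply Rinv_0_lt_compat. lra.
    + apply Rinv_le_contravar; lra.
  - apply is_lim_seq_const.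
  - apply lim_inv_S.
Qed.

Lemma dig_series j : is_series (fun n => / (INR n + 1) - / (INR n + INR (S j))) (H1 j).
Proof.
  induction j.
  - rewrite H1_0. apply RS_ext with (a := fun n => (fun _ => 0) n - (fun _ => 0) (S n)).
    + intro n. simpl INR. ring.
    + apply (telescope (fun _ => 0)). apply is_lim_seq_const.
  - assert (T : is_series (fun n => / (INR n + INR (S j)) - / (INR (S n) + INR (S j))) (/ (INR 0 + INR (S j)))).
    { apply (telescope (fun n => / (INR n + INR (S j)))).
      apply is_lim_seq_ext with (u := fun n => / (INR n + 1 + INR j)).
      - intro n. rewrite S_INR. f_equal. ring.
      - apply inv_lim. apply pos_INR. }
    pose proof (RS_plus _ _ _ _ IHj T) as P.
    rewrite H1_S. simpl (INR 0) in P. rewrite Rplus_0_l in P.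
    apply RS_ext with (2 := P). intro n. replace (INR (S n) + INR (S j)) with (INR n + INR (S (S j))) by (rewrite !S_INR; ring). ring.
Qed.

Lemma Ssum0_gen c N : sum_n_m (fun l => (c - INR l)/(INR l^2 - 0)) 1 N = c * H2 N - H1 N.
Proof.
  induction N.
  - rewrite H1_0, H2_0, sum_n_m_zero by lia. change (@eq R 0 (c*0 - 0)). ring.
  - rewrite sum_n_Sm by lia. rewrite IHN, H1_S, H2_S.
    change (@eq R (c * H2 N - H1 N + (c - INR (S N)) / (INR (S N) ^ 2 - 0))
                  (c * (H2 N + / INR (S N) ^ 2) - (H1 N + / INR (S N)))).
    assert (INR (S N) <> 0) by (apply not_0_INR; lia). field. auto.
Qed.

Definition Tm (m : nat) (a : R) : R := sum_n_m (fun l => (INR m - INR l) / (INR l ^ 2 - a)) 2 (m - 1).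

Lemma Ssum_split m a : (3 <= m)%nat -> Ssum m a = (INR m - 1)/(1 - a) + Tm m a.
Proof.
  intro hm. unfold Ssum, Tm. rewrite sum_Sn_m by lia.
  change (@eq R ((INR m - INR 1) / (INR 1 ^ 2 - a) + sum_n_m (fun l => (INR m - INR l) / (INR l ^ 2 - a)) 2 (m - 1))
    ((INR m - 1) / (1 - a) + sum_n_m (fun l => (INR m - INR l) / (INR l ^ 2 - a)) 2 (m - 1))).
  simpl (INR 1). f_equal. f_equal. ring.
Qed.

Lemma Tm_ge0_gen m a n : 0 <= a < 1 -> (S n <= m)%nat ->
  0 <= sum_n_m (fun l => (INR m - INR l) / (INR l ^ 2 - a)) 2 (S n).
Proof.
  intros Ha. induction n; intro Hn.
  - rewrite sum_n_m_zero by lia. change (0 <= 0). lra.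
  - rewrite sum_n_Sm by lia.
    change (0 <= sum_n_m (fun l => (INR m - INR l) / (INR l ^ 2 - a)) 2 (S n) + (INR m - INR (S (S n))) / (INR (S (S n)) ^ 2 - a)).
    assert (0 <= sum_n_m (fun l => (INR m - INR l) / (INR l ^ 2 - a)) 2 (S n)) by (apply IHn; lia).
    assert (INR (S (S n)) <= INR m) by (apply le_INR; lia).
    assert (1 <= INR (S (S n))) by (rewrite !S_INR; pose proof (pos_INR n); lra).
    set (y := INR (S (S n))) in *.
    assert (0 <= (INR m - y) / (y ^ 2 - a)).
    { apply Rdiv_le_0_compat. lra. assert (1*1 <= y*y) by (apply Rmult_le_compat; lra). simpl; lra. }
    lra.
Qed.

Lemma Tm_le_gen m a n : 0 <= a < 1 ->
  (1 - a) * sum_n_m (fun l => (INR m - INR l) / (INR l ^ 2 - a)) 2 (S n) <= INR m * (1 - / INR (S n)).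
Proof.
  intros Ha. pose proof (pos_INR m). induction n.
  - rewrite sum_n_m_zero by lia. change ((1-a)*0 <= INR m * (1 - / INR 1)). simpl INR.
    rewrite Rinv_1. lra.
  - rewrite sum_n_Sm by lia.
    change ((1-a) * (sum_n_m (fun l => (INR m - INR l) / (INR l ^ 2 - a)) 2 (S n) + (INR m - INR (S (S n))) / (INR (S (S n)) ^ 2 - a)) <= INR m * (1 - / INR (S (S n)))).
    rewrite Rmult_plus_distr_l.
    set (x := INR n) in *. pose proof (pos_INR n). fold x in H0.
    rewrite !S_INR in *. fold x in IHn |- *.
    assert (K : (1 - a) * ((INR m - (x + 1 + 1)) / ((x + 1 + 1) ^ 2 - a)) <= INR m / ((x+1)*(x+2))).
    { set (D := (x + 1 + 1) ^ 2 - a). set (E := (x+1)*(x+2)).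
      assert (0 < E) by (unfold E; nra). assert (E <= D) by (unfold D, E; simpl; nra).
      assert ((1 - a) * (INR m - (x + 1 + 1)) <= INR m) by nra.
      unfold Rdiv. rewrite <- Rmult_assoc.
      apply Rle_trans with (INR m * / D).
      - apply Rmult_le_compat_r. left; apply Rinv_0_lt_compat; lra. lra.
      - apply Rmult_le_compat_l. lra. apply Rinv_le_contravar; lra. }
    assert (INR m * (1 - / (x + 1)) + INR m / ((x + 1) * (x + 2)) = INR m * (1 - / (x + 1 + 1))) by (field; lra).
    lra.
Qed.

Lemma Tm_bounds m a : (3 <= m)%nat -> 0 <= a < 1 -> 0 <= Tm m a /\ (1 - a) * Tm m a <= INR m.
Proof.
  intros hm Ha. unfold Tm. replace (m - 1)%nat with (S (m - 2)) by lia. split.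
  - apply Tm_ge0_gen; auto; lia.
  - eapply Rle_trans. apply Tm_le_gen; auto.
    assert (0 < / INR (S (m - 2))) by (apply Rinv_0_lt_compat, lt_0_INR; lia).
    pose proof (pos_INR m). nra.
Qed.

Lemma core (M a T : R) : 3 <= M -> 0 < a < 1 -> 0 <= T -> (1 - a) * T <= M ->
  0 < a + / ((M - 1)/(1 - a) + T) < 1 /\
  1 - sqrt (a + / ((M - 1)/(1 - a) + T)) < (1 - sqrt a) * ((7 * M - 6) / (7 * M - 4)).
Proof.
  intros HM Ha HT HX.
  set (X := (1 - a) * T) in *.
  assert (HX0 : 0 <= X) by (unfold X; apply Rmult_le_pos; lra).
  assert (HS : / ((M - 1)/(1 - a) + T) = (1 - a) / (M - 1 + X)).
  { unfold X. field. split; [|lra]. nra. }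
  rewrite HS. set (a' := a + (1 - a) / (M - 1 + X)).
  assert (Hpos : 0 < (1 - a) / (M - 1 + X)) by (apply Rdiv_lt_0_compat; lra).
  assert (H1a' : 1 - a' = (1 - a) * ((M - 2 + X) / (M - 1 + X))) by (unfold a'; field; lra).
  assert (Hfrac : 0 < (M - 2 + X) / (M - 1 + X)) by (apply Rdiv_lt_0_compat; lra).
  assert (Ha' : 0 < a' < 1).
  { split. unfold a'; lra. assert (0 < (1 - a) * ((M - 2 + X) / (M - 1 + X))) by (apply Rmult_lt_0_compat; lra). lra. }
  split; [exact Ha'|].
  set (q0 := (7 * M - 6) / (7 * M - 4)).
  assert (Hq : (M - 2 + X) / (M - 1 + X) <= q0).
  { unfold q0. apply Rmult_le_reg_r with ((M - 1 + X) * (7 * M - 4)). nra.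
    replace ((M - 2 + X) / (M - 1 + X) * ((M - 1 + X) * (7 * M - 4))) with ((M - 2 + X) * (7*M - 4)) by (field; lra).
    replace ((7 * M - 6) / (7 * M - 4) * ((M - 1 + X) * (7 * M - 4))) with ((7 * M - 6) * (M - 1 + X)) by (field; lra).
    nra. }
  assert (Hq0 : 0 < q0) by (unfold q0; apply Rdiv_lt_0_compat; lra).
  set (u := sqrt a). set (u' := sqrt a').
  assert (Hu : 0 <= u) by apply sqrt_pos.
  assert (Huu : u < u') by (apply sqrt_lt_1; unfold a' in *; lra).
  assert (Eu : u * u = a) by (apply sqrt_sqrt; lra).
  assert (Eu' : u' * u' = a') by (apply sqrt_sqrt; lra).
  assert (E1 : 1 - u' = (1 - a') / (1 + u')) by (rewrite <- Eu'; field; lra).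
  assert (E0 : 1 - u = (1 - a) / (1 + u)) by (rewrite <- Eu; field; lra).
  rewrite E1, E0.
  assert (L1 : 1 - a' <= q0 * (1 - a)) by (rewrite H1a'; nra).
  apply Rle_lt_trans with (q0 * (1 - a) / (1 + u')).
  - unfold Rdiv. apply Rmult_le_compat_r. left; apply Rinv_0_lt_compat; lra. exact L1.
  - unfold Rdiv. assert (/(1+u') < /(1+u)) by (apply Rinv_lt_contravar; nra).
    assert (0 < (1-a)*q0) by nra. nra.
Qed.

Lemma wsq_bounds m (hm : (3 <= m)%nat) k : 0 < wsq m k < 1.
Proof.
  assert (HM : 3 <= INR m) by (replace 3 with (INR 3) by (simpl; ring); apply le_INR; lia).
  induction k.
  - simpl. rewrite Ssum_split by auto. destruct (Tm_bounds m 0 hm ltac:(lra)) as [T0 _].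
    replace ((INR m - 1) / (1 - 0)) with (INR m - 1) by field.
    split. apply Rinv_0_lt_compat; lra.
    rewrite <- Rinv_1. apply Rinv_lt_contravar; lra.
  - simpl. rewrite Ssum_split by auto.
    destruct (Tm_bounds m (wsq m k) hm ltac:(lra)) as [T0 T1].
    exact (proj1 (core (INR m) (wsq m k) _ HM IHk T0 T1)).
Qed.

Lemma eps_step m (hm : (3 <= m)%nat) k : eps m (S k) < eps m k * q m.
Proof.
  assert (HM : 3 <= INR m) by (replace 3 with (INR 3) by (simpl; ring); apply le_INR; lia).
  pose proof (wsq_bounds m hm k) as Hk.
  unfold eps, w, q. simpl wsq. rewrite Ssum_split by auto.
  destruct (Tm_bounds m (wsq m k) hm ltac:(lra)) as [T0 T1].
  exact (proj2 (core (INR m) (wsq m k) _ HM Hk T0 T1)).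
Qed.

Theorem corollary4 (m : nat) (hm : (3 <= m)%nat) :
  (forall k : nat, eps m (S k) < eps m k * q m) /\
  (forall k : nat, eps m (S k) < eps m 0 * q m ^ k) /\
  eps m 0 = 1 - / sqrt (INR m * (PI ^ 2 / 6) - INR m * trigamma (INR m)
                         - EulerGamma - digamma (INR m)) /\
  0 < eps m 0 < 1.
Proof.
  assert (HM : 3 <= INR m) by (replace 3 with (INR 3) by (simpl; ring); apply le_INR; lia).
  assert (E0 : 0 < eps m 0 < 1).
  { pose proof (wsq_bounds m hm 0). unfold eps, w.
    assert (0 < sqrt (wsq m 0)) by (apply sqrt_lt_R0; lra).
    assert (sqrt (wsq m 0) < 1) by (rewrite <- sqrt_1; apply sqrt_lt_1; lra). lra. }
  assert (Hq : 0 < q m < 1).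
  { unfold q. split. apply Rdiv_lt_0_compat; lra.
    apply (Rmult_lt_reg_r (7 * INR m - 4)). lra. unfold Rdiv. rewrite Rmult_assoc, Rinv_l by lra. lra. }
  split; [|split; [|split]].
  - apply eps_step; auto.
  - assert (G : forall k, eps m (S k) < eps m 0 * q m ^ S k).
    { induction k.
      - simpl. rewrite Rmult_1_r. apply eps_step; auto.
      - eapply Rlt_trans. apply eps_step; auto.
        simpl pow. simpl pow in IHk. nra. }
    intro k. eapply Rlt_le_trans. apply G. simpl pow.
    apply Rmult_le_compat_l. lra.
    assert (0 < q m ^ k) by (apply pow_lt; lra). nra.
  - unfold eps, w. simpl wsq. rewrite sqrt_inv. do 3 f_equal.
    pose proof (trig_series (m - 1)) as T1. pose proof (dig_series (m - 1)) as T2.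
    replace (S (m - 1)) with m in T1, T2 by lia.
    unfold trigamma, digamma.
    rewrite (is_series_unique _ _ T1).
    rewrite (is_series_unique _ _ T2).
    unfold Ssum. rewrite Ssum0_gen. ring.
  - exact E0.
Qed.
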